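(* Let $\mathcal{G}\subseteq C(\mathbb{R},\mathbb{R})$. The following conditions are equivalent: (1) $\mathcal{K}_\mathcal{G}=\{\mathrm{CL}(E):E\in\mathrm{CL}(\mathbb{R})\}$; (2) there exist $f,h\in C(\mathbb{R},\mathbb{R}^* )$ such that $f\le h$, $f^{-1}[\mathbb{R}]\cup h^{-1}[\mathbb{R}]=\mathbb{R}$, and $\mathcal{G}=[f,h]$.
   Context: $\mathbb{R}^*=\mathbb{R}\cup\{-\infty,\infty\}$ with its usual order topology; $C(\mathbb{R},\mathbb{R}^* )$ is the set of continuous functions $\mathbb{R}\to\mathbb{R}^*$; $f\le g$ means $f(x)\le g(x)$ for all $x$; $[f,h]=\{g\in C(\mathbb{R},\mathbb{R}):f\le g\le h\}$. For a closed set $E\subseteq\mathbb{R}$, $\mathrm{CL}(E)$ denotes the family of all closed subsets of $E$. For $\mathcal{G}\subseteq C(\mathbb{R},\mathbb{R})$ let $R_\mathcal{G}=\{(f,E)\in C(\mathbb{R},\mathbb{R})\times\mathrm{CL}(\mathbb{R}):(\exists g\in\mathcal{G})\, f\restriction E=g\restriction E\}$; for $\mathcal{F}\subseteq C(\mathbb{R},\mathbb{R})$ put $E_\mathcal{G}(\mathcal{F})=\{E\in\mathrm{CL}(\mathbb{R}):(\forall f\in\mathcal{F})\,(f,E)\in R_\mathcal{G}\}$, and let $\mathcal{K}_\mathcal{G}=\{E_\mathcal{G}(\mathcal{F}):\mathcal{F}\subseteq C(\mathbb{R},\mathbb{R})\}$. *)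

(* Defs.v *)
From HB Require Import structures.
From mathcomp Require Import all_boot all_order all_algebra.
From mathcomp Require Import all_classical all_reals all_analysis.
Set Implicit Arguments. Unset Strict Implicit. Unset Printing Implicit Defensive.
Import Order.TTheory GRing.Theory Num.Theory.
Import numFieldNormedType.Exports.
Local Open Scope classical_set_scope.
Local Open Scope ring_scope.

(* The real line is modelled by an arbitrary realType R; the extended line
   R^* is \bar R with its (order) topology from mathcomp-analysis. *)

Definition CL {R : realType} (E : set R) : set (set R) :=
  [set A | closed A /\ A `<=` E].

Definition RG {R : realType} (G : set (R -> R)) (f : R -> R) (E : set R) : Prop :=
  continuous f /\ closed E /\ exists2 g, G g & forall x, E x -> f x = g x.

Definition EG {R : realType} (G : set (R -> R)) (F : set (R -> R)) : set (set R) :=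
  [set E | closed E /\ forall f, F f -> RG G f E].

Definition KG {R : realType} (G : set (R -> R)) : set (set (set R)) :=
  [set K | exists2 F : set (R -> R), (forall f, F f -> continuous f) & K = EG G F].

Definition fint {R : realType} (f h : R -> \bar R) : set (R -> R) :=
  [set g | continuous g /\ (forall x, (f x <= (g x)%:E)%E) /\ (forall x, ((g x)%:E <= h x)%E)].

(* Main.v *)
Require Import Defs.
From HB Require Import structures.
From mathcomp Require Import all_boot all_order all_algebra.
From mathcomp Require Import all_classical all_reals all_analysis.
Import Order.TTheory GRing.Theory Num.Theory.
Import numFieldNormedType.Exports.
Local Open Scope classical_set_scope.
Local Open Scope ring_scope.
From mathcomp Require Import lra.
Lemma edense {R : realType} {a b : \bar R} : (a < b)%E ->
  exists c : R, (a < c%:E)%E /\ (c%:E < b)%E.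
Proof.
case: a => [a| |]; case: b => [b| |] //=; rewrite ?lte_fin => ab.
- exists ((a + b) / 2); rewrite !lte_fin; split.
  + by rewrite ltr_pdivlMr // mulrDr mulr1 ltrD2l.
  + by rewrite ltr_pdivrMr // mulrDr mulr1 ltrD2r.
- by exists (a + 1); rewrite !lte_fin ltry ltrDl ltr01.
- by exists (b - 1); rewrite !lte_fin ltNyr gtrBl ltr01.
- by exists 0; rewrite ltNyr ltry.
Qed.

Lemma near_ballR {R : realType} {x : R} {P : R -> Prop} :
  (\forall z \near x, P z) -> exists2 e : R, 0 < e & forall z, `|z - x| < e -> P z.
Proof.
move=> /nbhs_ballP [e e0 H]; exists e => // z zx; apply: H.
by rewrite /ball /= distrC.
Qed.

Lemma closed_near {R : realType} {S : set R} :
  (forall y, ~ S y -> \forall z \near y, ~ S z) -> closed S.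
Proof.
move=> H; rewrite -[S]setCK; apply: open_closedC; rewrite openE => y Hy.
exact: H.
Qed.

Lemma near_closed {R : realType} {S : set R} {y : R} :
  closed S -> ~ S y -> \forall z \near y, ~ S z.
Proof.
move=> cS Sy; have oS : open (~` S) by rewrite -closedC setCK.
by apply: open_nbhs_nbhs; split.
Qed.

Lemma econt_gt {R : realType} {F : R -> \bar R} {x : R} {a : \bar R} :
  {for x, continuous F} -> (a < F x)%E -> \forall y \near x, (a < F y)%E.
Proof.
move=> cF aF; apply: (cF [set y | (a < y)%E]); apply: open_nbhs_nbhs; split => //.
exact: open_ereal_gt_ereal.
Qed.

Lemma econt_lt {R : realType} {F : R -> \bar R} {x : R} {a : \bar R} :
  {for x, continuous F} -> (F x < a)%E -> \forall y \near x, (F y < a)%E.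
Proof.
move=> cF aF; apply: (cF [set y | (y < a)%E]); apply: open_nbhs_nbhs; split => //.
exact: open_ereal_lt_ereal.
Qed.

Lemma econtP {R : realType} (F : R -> \bar R) x :
  (forall a, (a < F x)%E -> \forall y \near x, (a < F y)%E) ->
  (forall b, (F x < b)%E -> \forall y \near x, (F y < b)%E) ->
  {for x, continuous F}.
Proof.
move=> Hl Hu U; rewrite itv_nbhsE => -[i [oi xi] iU].
suff : \forall y \near x, U (F y) by [].
move: oi xi iU; case: i => [[[]l|[]] [[]u|[]]] // _ xi iU; rewrite in_itv /= in xi.
- move/andP: xi => [lx xu]; near=> y; apply: iU; rewrite /= in_itv /=.
  apply/andP; split; near: y; [exact: Hl|exact: Hu].
- move/andP: xi => [lx _]; near=> y; apply: iU; rewrite /= in_itv /= andbT.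
  near: y; exact: Hl.
- near=> y; apply: iU; rewrite /= in_itv /=.
  near: y; exact: Hu xi.
- near=> y; apply: iU; by rewrite /= in_itv.
Unshelve. all: by end_near.
Qed.

Lemma EFin_cont {R : realType} {g : R -> R} : continuous g -> continuous (EFin \o g).
Proof.
move=> cg x; apply: cvg_EFin; first exact: nearW.
exact: cg.
Qed.

Definition Eph {R : realType} (f h : R -> \bar R) (p : R -> R) : set R :=
  [set y | (f y <= (p y)%:E)%E /\ ((p y)%:E <= h y)%E].

Lemma closed_ele {R : realType} {A B : R -> \bar R} :
  continuous A -> continuous B -> closed [set y | (A y <= B y)%E].
Proof.
move=> cA cB; apply: closed_near => y /negP; rewrite -ltNge => BA.
have [c [Bc cA']] := edense BA.
have H := @filterI _ _ (nbhs_filter y) _ _ (econt_lt (cB y) Bc) (econt_gt (cA y) cA').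
apply: filterS H => z [h1 h2] /=; apply/negP; rewrite -ltNge.
exact: (lt_trans h1 h2).
Qed.

Lemma Eph_closed {R : realType} (f h : R -> \bar R) (p : R -> R) :
  continuous f -> continuous h -> continuous p -> closed (Eph f h p).
Proof.
move=> cf ch cp.
exact: (closedI (closed_ele cf (EFin_cont cp)) (closed_ele (EFin_cont cp) ch)).
Qed.

Lemma fin_lty {R : realType} {f h : R -> \bar R} (x : R) :
  (forall x, (f x <= h x)%E) ->
  (f x \is a fin_num \/ h x \is a fin_num) -> (f x < +oo)%E /\ (-oo < h x)%E.
Proof.
move=> fh [] /fin_numPlt /andP[a b].
- by split => //; exact: (lt_le_trans a (fh x)).
- by split => //; exact: (le_lt_trans (fh x) b).
Qed.

Lemma ext_fint {R : realType} (f h : R -> \bar R) (p : R -> R) (A : set R) :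
  continuous f -> continuous h -> (forall x, (f x <= h x)%E) ->
  (forall x, f x \is a fin_num \/ h x \is a fin_num) ->
  continuous p -> A `<=` Eph f h p ->
  exists2 g, fint f h g & forall x, A x -> p x = g x.
Proof.
move=> cf ch fh fin cp AE.
pose G' := f \max (h \min (EFin \o p)).
have cG' : continuous G'.
  exact: (max_fun_continuous cf (min_fun_continuous ch (EFin_cont cp))).
have G'fin : forall y, G' y \is a fin_num.
  move=> y; have [fy hy] := fin_lty y fh (fin y).
  apply/fin_numPlt; rewrite /G' /=; apply/andP; split.
  - by rewrite lt_max; apply/orP; right; rewrite lt_min hy ltNyr.
  - by rewrite gt_max fy /= gt_min ltry orbT.
exists (fine \o G').
  split; [|split].
  - move=> x; have Hx : G' z @[z --> x] --> (fine (G' x))%:E.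
      by rewrite fineK ?G'fin //; exact: cG'.
    by move/fine_cvgP: Hx => [].
  - by move=> x /=; rewrite fineK ?G'fin // /G' /= le_max lexx.
  - move=> x /=; rewrite fineK ?G'fin // /G' /= ge_max fh /= ge_min lexx //.
move=> x /AE [fp ph]; rewrite /= /G' /= min_r // max_r //.
Qed.

Lemma bump {R : realType} (g0 : R -> R) (x e v : R) :
  continuous g0 -> 0 < e -> exists p : R -> R,
  [/\ continuous p, p x = v & forall z, e <= `|z - x| -> p z = g0 z].
Proof.
move=> cg e0.
pose b : R -> R := (fun=> 0) \max (fun z => e - `|z - x|).
have cb : continuous b.
  apply: max_fun_continuous; first exact: cst_continuous.
  move=> z.
  have c1 : {for z, continuous (fun y : R => `|y - x|)}.
    apply: (@continuous_comp _ _ _ (fun y : R => y - x) Num.Def.normr).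
      exact: (continuousB (fun U (hU : nbhs z U) => hU) (@cst_continuous _ _ x z)).
    exact: norm_continuous.
  exact: (continuousB (@cst_continuous _ _ e z) c1).
pose k := (v - g0 x) / e.
exists (fun z => g0 z + k * b z); split.
- move=> z.
  have c2 : {for z, continuous (fun y => k * b y)}.
    exact: (continuousM (@cst_continuous _ _ k z) (cb z)).
  exact: (continuousD (cg z) c2).
- rewrite /b /= subrr normr0 subr0 max_r ?ltW // /k divfK ?gt_eqF //.
  by rewrite addrC subrK.
- move=> z ez; rewrite /b /= max_l ?mulr0 ?addr0 // subr_le0.
  done.
Qed.

Lemma dir21 {R : realType} (f h : R -> \bar R) :
  continuous f -> continuous h -> (forall x, (f x <= h x)%E) ->
  (forall x, f x \is a fin_num \/ h x \is a fin_num) ->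
  KG (fint f h) = [set CL E | E in [set E : set R | closed E]].
Proof.
move=> cf ch fh fin.
have ext := fun p A cp AE => @ext_fint R f h p A cf ch fh fin cp AE.
have [g0 g0f _] := ext (fun=> 0) set0 (@cst_continuous _ _ 0) (sub0set _).
have [g0c [g0l g0u]] := g0f.
have EGE : forall F : set (R -> R), (forall p, F p -> continuous p) ->
    EG (fint f h) F = CL (\bigcap_(p in F) Eph f h p).
  move=> F cF; apply/seteqP; split => A.
  - move=> [cA HA]; split => // y Ay p Fp.
    have [_ [_ [g [gc [gf gh]] eq]]] := HA p Fp.
    by rewrite /Eph /= (eq y Ay); split; [exact: gf|exact: gh].
  - move=> [cA AI]; split => // p Fp; split; first exact: cF.
    split => //; apply: ext; first exact: cF.
    by move=> y Ay; exact: (AI y Ay p Fp).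
apply/seteqP; split => K.
- move=> [F cF ->]; exists (\bigcap_(p in F) Eph f h p); last by rewrite EGE.
  by apply: closed_bigI => p Fp; exact: (Eph_closed f h p cf ch (cF p Fp)).
- move=> [E cE <-]; exists [set p | continuous p /\ E `<=` Eph f h p].
    by move=> p [].
  rewrite EGE; last by move=> p [].
  congr CL; apply/seteqP; split.
    by move=> y Ey p [_ H]; exact: H.
  move=> y Hy; apply: contrapT => Ey.
  have [e e0 He] := near_ballR (near_closed cE Ey).
  have Ez : forall p, (forall z, e <= `|z - y| -> p z = g0 z) -> E `<=` Eph f h p.
    move=> p pz z Ez; rewrite /Eph /= pz; first by split; [exact: g0l|exact: g0u].
    by rewrite leNgt; apply/negP => /He.
  case: (fin y) => Hf.
  + have [p [cp py pz]] := bump g0 y e (fine (f y) - 1) g0c e0.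
    have [+ _] := Hy p (conj cp (Ez p pz)).
    have fyE : f y = (fine (f y))%:E by rewrite fineK.
    rewrite py {1}fyE lee_fin; lra.
  + have [p [cp py pz]] := bump g0 y e (fine (h y) + 1) g0c e0.
    have [_ +] := Hy p (conj cp (Ez p pz)).
    have hyE : h y = (fine (h y))%:E by rewrite fineK.
    rewrite py {2}hyE lee_fin; lra.
Qed.

Lemma closed1 {R : realType} (y : R) : closed [set y].
Proof. exact: (accessible_closed_set1 (hausdorff_accessible (@Rhausdorff R))). Qed.

Definition Gv {R : realType} (G : set (R -> R)) (x t : R) : Prop :=
  exists2 g, G g & g x = t.

Definition Pset {R : realType} (G : set (R -> R)) (p : R -> R) : set R :=
  [set y | Gv G y (p y)].

Definition KP {R : realType} (G : set (R -> R)) : Prop :=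
  forall p : R -> R, continuous p ->
    closed (Pset G p) /\ exists2 g, G g & forall y, Pset G p y -> p y = g y.

Lemma Kprop {R : realType} {G : set (R -> R)} :
  KG G = [set CL E | E in [set E : set R | closed E]] -> KP G.
Proof.
move=> H1 p cp.
have : KG G (EG G [set p]) by exists [set p] => // q ->.
rewrite H1 => -[E cE HE].
have PE : Pset G p `<=` E.
  move=> y [g Gg gy].
  have : EG G [set p] [set y].
    split; first exact: closed1.
    move=> q ->; split => //; split; first exact: closed1.
    by exists g => // z ->.
  by rewrite -HE => -[_ sub]; exact: sub.
have : EG G [set p] E by rewrite -HE; split.
move=> [_ /(_ p erefl) [_ [_ [g Gg eq]]]].
have EP : E `<=` Pset G p by move=> y Ey; exists g => //; rewrite (eq y Ey).
have -> : Pset G p = E by apply/seteqP; split.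
split => //; exists g => // y Ey; exact: eq.
Qed.

Lemma F2 {R : realType} {G : set (R -> R)} :
  KG G = [set CL E | E in [set E : set R | closed E]] ->
  (exists g, G g) /\ (forall x, exists t, ~ Gv G x t).
Proof.
move=> H1.
have : KG G (CL set0) by rewrite H1; exists set0 => //; exact: closed0.
move=> [F cF HF].
have E0 : EG G F set0 by rewrite -HF; split; [exact: closed0|].
have [p Fp] : exists p, F p.
  apply: contrapT => nF.
  have : EG G F [set 0].
    split; first exact: closed1.
    by move=> p Fp; exfalso; apply: nF; exists p.
  by rewrite -HF => -[_ /(_ 0 erefl)].
split.
  by have [_ /(_ p Fp) [_ [_ [g Gg _]]]] := E0; exists g.
move=> x; apply: contrapT => nx.
have : EG G F [set x].
  split; first exact: closed1.
  move=> q Fq; split; first exact: cF.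
  split; first exact: closed1.
  have : exists t, t = q x by exists (q x).
  move=> [t tq]; have : ~ ~ Gv G x t by move=> Hn; apply: nx; exists t.
  move=> /contrapT [g Gg gx]; exists g => // z ->; by rewrite gx tq.
by rewrite -HF => -[_ /(_ x erefl)].
Qed.

Lemma Cl {R : realType} {G : set (R -> R)} {p : R -> R} {y d : R} :
  KP G -> continuous p -> 0 < d ->
  (forall z, y < z < y + d -> Pset G p z) -> Pset G p y.
Proof.
move=> KPG cp d0 H; have [cP _] := KPG p cp.
apply: contrapT => ny.
have [e e0 He] := near_ballR (near_closed cP ny).
pose m := Num.min d e.
have m0 : 0 < m by rewrite lt_min d0 e0.
have md : m <= d by rewrite ge_min lexx.
have me : m <= e by rewrite ge_min lexx orbT.
apply: (He (y + m / 2)); last by apply: H; apply/andP; split; lra.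
have -> : y + m / 2 - y = m / 2 by lra.
rewrite ger0_norm; lra.
Qed.

Lemma Itv {R : realType} {G : set (R -> R)} {g1 g2 : R -> R} {x t : R} :
  (forall g, G g -> continuous g) -> KP G ->
  G g1 -> G g2 -> g1 x < t -> t < g2 x -> Gv G x t.
Proof.
move=> HG KPG G1 G2 lt1 lt2; apply: contrapT => nt.
have [cP _] := KPG (fun=> t) (@cst_continuous _ _ t).
have N1 : \forall z \near x, ~ Pset G (fun=> t) z by exact: near_closed cP nt.
have N2 : \forall z \near x, (t%:E < (g2 z)%:E)%E.
  by apply: (econt_gt (EFin_cont (HG g2 G2) x)); rewrite lte_fin.
have [e e0 He] := near_ballR (@filterI _ _ (nbhs_filter x) _ _ N1 N2).
have [d [d0 de]] : exists d : R, 0 < d /\ d < e by exists (e / 2); split; lra.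
pose lam := (fun=> 1) \min ((fun=> 0) \max (fun z : R => (z - x) / d)).
have clam : continuous lam.
  apply: min_fun_continuous; first exact: cst_continuous.
  apply: max_fun_continuous; first exact: cst_continuous.
  move=> z.
  have c1 : {for z, continuous (fun y : R => y - x)}.
    exact: (continuousB (fun U (hU : nbhs z U) => hU) (@cst_continuous _ _ x z)).
  exact: (continuousM c1 (@cst_continuous _ _ d^-1 z)).
pose p := fun z => g1 z + (g2 z - g1 z) * lam z.
have cp : continuous p.
  move=> z.
  have c3 : {for z, continuous (fun y => g2 y - g1 y)}.
    exact: (continuousB (HG g2 G2 z) (HG g1 G1 z)).
  have c2 : {for z, continuous (fun y => (g2 y - g1 y) * lam y)}.
    exact: (continuousM c3 (clam z)).
  exact: (continuousD (HG g1 G1 z) c2).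
have [_ [g Gg Hg]] := KPG p cp.
have pl : forall z, z <= x -> p z = g1 z.
  move=> z zx; rewrite /p /lam /= (@max_l _ _ 0) ?min_r ?mulr0 ?addr0 //.
  by rewrite pmulr_lle0 ?invr_gt0 // subr_le0.
have pr : p (x + d) = g2 (x + d).
  have E1 : (x + d - x) / d = 1 by rewrite addrAC subrr add0r divff // gt_eqF.
  rewrite /p /lam /= E1 max_r ?ler01 // min_l //.
  by rewrite mulr1 addrC subrK.
have gx : g x = g1 x by rewrite -Hg ?pl //; exists g1 => //; rewrite pl.
have gxd : g (x + d) = g2 (x + d).
  by rewrite -Hg ?pr //; exists g2 => //; rewrite pr.
have [_ t2] : ~ Pset G (fun=> t) (x + d) /\ (t%:E < (g2 (x + d))%:E)%E.
  apply: He; have -> : x + d - x = d by lra.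
  rewrite ger0_norm; lra.
have [c cI gc] : exists2 c, c \in `[x, x + d] & g c = t.
  apply: IVT; first lra.
    exact: continuous_subspaceT (HG g Gg).
  rewrite gx gxd; apply/andP; split.
    by rewrite ge_min (ltW lt1).
  by move: t2; rewrite lte_fin => t2; rewrite le_max (ltW t2) orbT.
have cx : `|c - x| < e.
  move: cI; rewrite in_itv /= => /andP[c1 c2].
  rewrite ger0_norm; lra.
have [nP _] := He c cx.
by apply: nP; exists g.
Qed.

Definition finf {R : realType} (G : set (R -> R)) (x : R) : \bar R :=
  ereal_inf [set (g x)%:E | g in G].
Definition fsup {R : realType} (G : set (R -> R)) (x : R) : \bar R :=
  ereal_sup [set (g x)%:E | g in G].

Lemma finf_lb {R : realType} {G : set (R -> R)} {g : R -> R} (x : R) :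
  G g -> (finf G x <= (g x)%:E)%E.
Proof. by move=> Gg; apply: ereal_inf_lbound; exists g. Qed.

Lemma fsup_ub {R : realType} {G : set (R -> R)} {g : R -> R} (x : R) :
  G g -> ((g x)%:E <= fsup G x)%E.
Proof. by move=> Gg; apply: ereal_sup_ubound; exists g. Qed.

Lemma finf_lt {R : realType} {G : set (R -> R)} {x : R} {a : \bar R} :
  (finf G x < a)%E -> exists2 g, G g & ((g x)%:E < a)%E.
Proof. by move/ereal_inf_lt => [_ [g Gg <-] ga]; exists g. Qed.

Lemma fsup_gt {R : realType} {G : set (R -> R)} {x : R} {a : \bar R} :
  (a < fsup G x)%E -> exists2 g, G g & (a < (g x)%:E)%E.
Proof. by move/ereal_sup_gt => [_ [g Gg <-] ga]; exists g. Qed.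

Lemma Mid {R : realType} {G : set (R -> R)} {x t : R} :
  (forall g, G g -> continuous g) -> KP G ->
  (finf G x < t%:E)%E -> (t%:E < fsup G x)%E -> Gv G x t.
Proof.
move=> HG KPG /finf_lt [g1 G1 l1] /fsup_gt [g2 G2 l2].
by apply: (Itv HG KPG G1 G2); rewrite -lte_fin.
Qed.

Lemma Mem {R : realType} {G : set (R -> R)} {p : R -> R} :
  (forall g, G g -> continuous g) -> KP G -> (exists g, G g) ->
  continuous p -> (forall y, (finf G y <= (p y)%:E)%E) ->
  (forall y, ((p y)%:E <= fsup G y)%E) -> forall y, Pset G p y.
Proof.
move=> HG KPG [g0 G0] cp pl pu y.
have e1 : finf G y = (p y)%:E \/ (finf G y < (p y)%:E)%E.
  by move: (pl y); rewrite le_eqVlt => /orP[/eqP|]; [left|right].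
have e2 : (p y)%:E = fsup G y \/ ((p y)%:E < fsup G y)%E.
  by move: (pu y); rewrite le_eqVlt => /orP[/eqP|]; [left|right].
case: e1 => [E1|L1]; case: e2 => [E2|L2].
- exists g0 => //; apply: le_anti; apply/andP; split; rewrite -lee_fin.
    by rewrite E2; exact: fsup_ub.
  by rewrite -E1; exact: finf_lb.
-
  have [g2 G2 l2] := fsup_gt L2.
  pose psi := fun z => p z + (z - y).
  have cpsi : continuous psi.
    move=> z.
    have c1 : {for z, continuous (fun w : R => w - y)}.
      exact: (continuousB (fun U (hU : nbhs z U) => hU) (@cst_continuous _ _ y z)).
    exact: (continuousD (cp z) c1).
  have N : \forall z \near y, ((0:R)%:E < ((fun w => g2 w - psi w) z)%:E)%E.
    apply: (econt_gt (EFin_cont _ y)).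
      by move=> z; exact: (continuousB (HG g2 G2 z) (cpsi z)).
    by rewrite lte_fin /psi subrr addr0 subr_gt0 -lte_fin.
  have [e e0 He] := near_ballR N.
  have Hc := Cl (y:=y) KPG cpsi e0.
  suff : Pset G psi y by rewrite /Pset /= /psi subrr addr0.
  apply: Hc => z /andP[yz zy]; rewrite /Pset /=.
  have zz : `|z - y| < e by rewrite ger0_norm; lra.
  have := He z zz; rewrite lte_fin subr_gt0 => lt2.
  apply: (Mid HG KPG).
    by apply: (le_lt_trans (pl z)); rewrite lte_fin /psi; lra.
  by apply: (lt_le_trans _ (fsup_ub z G2)); rewrite lte_fin.
-
  have [g1 G1 l1] := finf_lt L1.
  pose psi := fun z => p z - (z - y).
  have cpsi : continuous psi.
    move=> z.
    have c1 : {for z, continuous (fun w : R => w - y)}.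
      exact: (continuousB (fun U (hU : nbhs z U) => hU) (@cst_continuous _ _ y z)).
    exact: (continuousB (cp z) c1).
  have N : \forall z \near y, ((0:R)%:E < ((fun w => psi w - g1 w) z)%:E)%E.
    apply: (econt_gt (EFin_cont _ y)).
      by move=> z; exact: (continuousB (cpsi z) (HG g1 G1 z)).
    by rewrite lte_fin /psi subrr subr0 subr_gt0 -lte_fin.
  have [e e0 He] := near_ballR N.
  have Hc := Cl (y:=y) KPG cpsi e0.
  suff : Pset G psi y by rewrite /Pset /= /psi subrr subr0.
  apply: Hc => z /andP[yz zy]; rewrite /Pset /=.
  have zz : `|z - y| < e by rewrite ger0_norm; lra.
  have := He z zz; rewrite lte_fin subr_gt0 => lt1.
  apply: (Mid HG KPG).
    by apply: (le_lt_trans (finf_lb z G1)); rewrite lte_fin.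
  by apply: (lt_le_trans _ (pu z)); rewrite lte_fin /psi; lra.
- exact: Mid.
Qed.

Lemma fsup_cont {R : realType} {G : set (R -> R)} :
  (forall g, G g -> continuous g) -> KP G -> (exists g, G g) ->
  continuous (fsup G).
Proof.
move=> HG KPG [g0 G0] x; apply: econtP.
- move=> a /fsup_gt [g Gg ag].
  have H := econt_gt (EFin_cont (HG g Gg) x) ag.
  apply: filterS H => z az /=; exact: (lt_le_trans az (fsup_ub z Gg)).
- move=> b hb; have [s [hs sb]] := edense hb.
  have g0s : ((g0 x)%:E < s%:E)%E := le_lt_trans (fsup_ub x G0) hs.
  have nGs : ~ Pset G (fun=> s) x.
    move=> [g Gg gx]; have := fsup_ub x Gg; rewrite gx => H.
    by move: (lt_le_trans hs H); rewrite ltxx.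
  have [cP _] := KPG (fun=> s) (@cst_continuous _ _ s).
  have N1 := near_closed cP nGs.
  have N2 := econt_lt (EFin_cont (HG g0 G0) x) g0s.
  have H := @filterI _ _ (nbhs_filter x) _ _ N1 N2.
  apply: filterS H => z [nz gz] /=.
  rewrite ltNge; apply/negP => bz; apply: nz; rewrite /Pset /=.
  apply: (Mid HG KPG).
    exact: (le_lt_trans (finf_lb z G0) gz).
  exact: (lt_le_trans sb bz).
Qed.

Lemma finf_cont {R : realType} {G : set (R -> R)} :
  (forall g, G g -> continuous g) -> KP G -> (exists g, G g) ->
  continuous (finf G).
Proof.
move=> HG KPG [g0 G0] x; apply: econtP.
- move=> a ha; have [s [as_ sb]] := edense ha.
  have g0s : (s%:E < (g0 x)%:E)%E := lt_le_trans sb (finf_lb x G0).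
  have nGs : ~ Pset G (fun=> s) x.
    move=> [g Gg gx]; have := finf_lb x Gg; rewrite gx => H.
    by move: (le_lt_trans H sb); rewrite ltxx.
  have [cP _] := KPG (fun=> s) (@cst_continuous _ _ s).
  have N1 := near_closed cP nGs.
  have N2 := econt_gt (EFin_cont (HG g0 G0) x) g0s.
  have H := @filterI _ _ (nbhs_filter x) _ _ N1 N2.
  apply: filterS H => z [nz gz] /=.
  rewrite ltNge; apply/negP => za; apply: nz; rewrite /Pset /=.
  apply: (Mid HG KPG).
    exact: (le_lt_trans za as_).
  exact: (lt_le_trans gz (fsup_ub z G0)).
- move=> b /finf_lt [g Gg gb].
  have H := econt_lt (EFin_cont (HG g Gg) x) gb.
  apply: filterS H => z az /=; exact: (le_lt_trans (finf_lb z Gg) az).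
Qed.

Lemma cover {R : realType} {G : set (R -> R)} {y t : R} :
  (forall g, G g -> continuous g) -> KP G -> (exists g, G g) ->
  ~ Gv G y t -> finf G y \is a fin_num \/ fsup G y \is a fin_num.
Proof.
move=> HG KPG [g0 G0] nt; apply: contrapT => nf; apply: nt.
apply: (Mid HG KPG).
  move: (finf_lb y G0) nf; case: (finf G y) => [r| |] //= _ nf.
    by exfalso; apply: nf; left.
  by rewrite ltNyr.
move: (fsup_ub y G0) nf; case: (fsup G y) => [r| |] //= _ nf.
  by exfalso; apply: nf; right.
by rewrite ltry.
Qed.

Theorem corollary3p4 (R : realType) (G : set (R -> R))
  (HG : forall g, G g -> continuous g) :
  KG G = [set CL E | E in [set E : set R | closed E]] <->
  exists f h : R -> \bar R,
    [/\ continuous f, continuous h, (forall x, (f x <= h x)%E),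
        f @^-1` range EFin `|` h @^-1` range EFin = setT & G = fint f h].
Proof.
split.
- move=> H1; have KPG := Kprop H1; have [[g0 G0] Ht] := F2 H1.
  have exG : exists g, G g by exists g0.
  exists (finf G), (fsup G); split.
  + exact: finf_cont.
  + exact: fsup_cont.
  + by move=> x; exact: (le_trans (finf_lb x G0) (fsup_ub x G0)).
  + apply/seteqP; split => // y _.
    have [t nt] := Ht y.
    case: (cover HG KPG exG nt) => Hf; [left|right].
      by exists (fine (finf G y)) => //; rewrite fineK.
    by exists (fine (fsup G y)) => //; rewrite fineK.
  + apply/seteqP; split.
      move=> g Gg; split; first exact: HG.
      by split => x; [exact: finf_lb|exact: fsup_ub].
    move=> p [cp [pl pu]].
    have Hall := Mem HG KPG exG cp pl pu.
    have [_ [g Gg Hg]] := KPG p cp.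
    by have -> : p = g by apply/funext => y; exact: Hg.
- move=> [f [h [cf ch fh cov ->]]]; apply: dir21 => // x.
  have : [set: R] x by [].
  by rewrite -cov => -[[r _ <-]|[r _ <-]]; [left|right].
Qed.
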